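(* Let $G$ be a finite non-abelian group satisfying condition (Con). Then the isoperimetric number of $\mathcal C_G$ satisfies $$\frac{|Z(G)|}{2}\le i(\mathcal C_G)\le \sqrt{|Z(G)|\big(2(|G|-1)-|Z(G)|\big)}.$$
   Context: For a finite group $G$, the commuting graph $\mathcal C_G$ is the simple undirected graph with vertex set $G$ in which distinct $u,v\in G$ are adjacent iff $uv=vu$. $Z(G)$ is the center of $G$ and $C(v)=\{w\in G: wv=vw\}$ the centralizer of $v$. Condition (Con): for all $u,v\in G\setminus Z(G)$, either $C(u)=C(v)$ or $C(u)\cap C(v)=Z(G)$. For a graph $\Gamma$ with vertex set $V$, $\partial S$ is the set of edges with exactly one endpoint in $S$, and the isoperimetric number is $i(\Gamma)=\min\{|\partial S|/|S|: S\subseteq V,\ 0<|S|\le |V|/2\}$. *)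

(* Defs.v *)
From mathcomp Require Import all_boot all_order all_algebra all_fingroup all_solvable.
Set Implicit Arguments. Unset Strict Implicit. Unset Printing Implicit Defensive.
Import Order.TTheory GRing.Theory Num.Theory.
Local Open Scope group_scope.

Definition Con (gT : finGroupType) : Prop :=
  forall u v : gT, u \notin 'Z([set: gT]) -> v \notin 'Z([set: gT]) ->
    'C[u] = 'C[v] \/ 'C[u] :&: 'C[v] = 'Z([set: gT]).

Definition commuting_adj (gT : finGroupType) (u v : gT) : bool :=
  (u != v) && (u * v == v * u)%g.

(* Edge boundary of S: edges with exactly one endpoint in S, each edge
   represented once as the ordered pair (u, v) with u in S, v not in S. *)
Definition edge_boundary (gT : finGroupType) (S : {set gT}) : {set gT * gT} :=
  [set p | [&& p.1 \in S, p.2 \notin S & commuting_adj p.1 p.2]].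

(* Isoperimetric number of the commuting graph, as a rational number:
   minimum of |dS|/|S| over 0 < |S| <= |G|/2.  The neutral value #|gT| is an
   upper bound of every ratio (|dS| <= |S| * |G|), so it never affects the min
   (and the admissible family is nonempty as soon as |G| >= 2). *)
Definition isoperimetric_number (gT : finGroupType) : rat :=
  (\big[Order.min/(#|gT|%:R : rat)]_(S : {set gT} | (0 < #|S|)%N && (2 * #|S| <= #|gT|)%N)
     ((#|edge_boundary S|%:R : rat) / (#|S|%:R)))%R.

(* Main.v *)
Require Import Defs.
From mathcomp Require Import all_boot all_order all_algebra all_fingroup all_solvable.
From mathcomp Require Import zify ring lra.
Import Order.TTheory GRing.Theory Num.Theory.
Local Open Scope ring_scope.

Lemma arith a s z c e n : (a <= z)%N -> (a <= s)%N -> (s + c)%N = n ->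
  (2 * z <= n)%N -> (2 * s <= n)%N -> (a * c + (s - a) * (z - a) <= e)%N ->
  (z * s <= 2 * e)%N.
Proof.
move=> h1 h2 h3 z2 s2 h4. have hn : (s <= c)%N by lia. have hz : (z <= c)%N by lia.
have ez : z = (z - a + a)%N by rewrite subnK.
have es : s = (s - a + a)%N by rewrite subnK.
move: ez es h4 hn hz; move: (z - a)%N (s - a)%N => w b ez es h hn hz.
rewrite {}ez {}es in hn hz *.
have h5 : (a * (b + a) <= a * c)%N by apply: leq_mul.
have h6 : (a * (w + a) <= a * c)%N by apply: leq_mul.
nia.
Qed.

Section Aux.
Variable gT : finGroupType.
Local Open Scope group_scope.
Local Notation Z := ('Z([set: gT]))%g.

Lemma Zcomm (x y : gT) : x \in Z -> commute x y.
Proof. by case/centerP => _; apply; rewrite inE. Qed.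

Lemma inZ (x : gT) : (forall y, commute x y) -> x \in Z.
Proof. by move=> H; apply/centerP; split; [rewrite inE | move=> y _]. Qed.

Lemma half_le (H : {group gT}) : H :!=: setT -> (2 * #|H| <= #|gT|)%N.
Proof.
move=> HT.
have hd : (#|H| %| #|[set: gT]|)%N by apply: cardSg; apply: subsetT.
have hl : (#|H| < #|[set: gT]|)%N by apply: proper_card; rewrite properT.
have h0 : (0 < #|H|)%N by apply: cardG_gt0.
rewrite -cardsT; case/dvdnP: hd hl => k ->.
move=> hl; have : (1 < k)%N.
  case: k hl => [|[|k]] //=; rewrite ?mul0n ?mul1n ?ltnn //.
by move=> hk; apply: leq_mul.
Qed.

Lemma Z_half : ~~ abelian [set: gT]%g -> (2 * #|Z| <= #|gT|)%N.
Proof.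
move=> nab; apply: half_le; apply/eqP=> E; case/negP: nab; apply/center_idP.
exact: E.
Qed.

Lemma lower_gen (Z' S : {set gT}) : (forall x y, x \in Z' -> commute x y) ->
  (2 * #|Z'| <= #|gT|)%N -> (0 < #|S|)%N ->
  (2 * #|S| <= #|gT|)%N -> (#|Z'| * #|S| <= 2 * #|edge_boundary S|)%N.
Proof.
move=> Zcomm z2 s0 s2.
set A := setX (S :&: Z') (~: S).
set B := setX (S :\: Z') (Z' :\: S).
have sub : A :|: B \subset edge_boundary S.
  apply/subsetP=> [[x y]]; rewrite in_setU !in_setX !in_setI !in_setD in_setC in_set /commuting_adj /=.
  case/orP=> [/andP [/andP [H1 H2] H3]|/and3P [/andP [H1 H2] H3 H4]].
  - rewrite H1 H3 /=; apply/andP; split; first by apply/eqP=> e; subst; rewrite H1 in H3.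
    by apply/eqP; apply: Zcomm.
  - rewrite H2 H3 /=.
    apply/andP; split; first by apply/eqP=> e; subst; rewrite H2 in H3.
    by apply/eqP; apply/esym; apply: Zcomm.
have dis : A :&: B = set0.
  apply/setP=> [[x y]]; rewrite !inE /=.
  by case: (x \in Z'); rewrite ?andbF ?andbT ?andFb.
have := subset_leq_card sub; rewrite cardsU dis cards0 subn0 !cardsX.
rewrite !cardsD (setIC Z' S).
have := cardsC S; have := subset_leq_card (subsetIl S Z').
have := subset_leq_card (subsetIr S Z').
set a := #|S :&: Z'|; set s := #|S|; set c := #|~: S|; set z := #|Z'|.
set e := #|edge_boundary S|.
move=> h1 h2 h3 h4; exact: (@arith _ _ _ _ _ _ h1 h2 h3 z2 s2 h4).
Qed.

Lemma upper_set (u : gT) : Con gT -> u \notin Z ->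
  edge_boundary ('C[u] :\: Z) \subset setX ('C[u] :\: Z) Z.
Proof.
move=> con uZ; apply/subsetP=> [[x y]]; rewrite /edge_boundary in_set in_setX !in_setD /commuting_adj /=.
case/and3P=> /andP [xZ xC] yB /andP [_ /eqP cxy].
rewrite xZ xC /=.
have yC : y \in 'C[x]%g by apply/cent1P.
case: (con x u xZ uZ) => [E|E].
  rewrite E in yC; move: yB; rewrite yC andbT.
  by rewrite negbK.
have : x \in ('C[x] :&: 'C[u])%g by rewrite inE cent1id xC.
by rewrite E (negbTE xZ).
Qed.

End Aux.
Arguments Zcomm {gT x y}.
Arguments inZ {gT x}.
Arguments half_le {gT H}.
Arguments Z_half {gT}.
Arguments lower_gen {gT Z' S}.
Arguments upper_set {gT u}.

Theorem proposition3p6 (R : rcfType) (gT : finGroupType) :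
  ~~ abelian [set: gT]%g -> Con gT ->
  (#|'Z([set: gT])%g|%:R / 2 <= ratr (isoperimetric_number gT) :> R) /\
  (ratr (isoperimetric_number gT) <=
     Num.sqrt (#|'Z([set: gT])%g|%:R * (2 * (#|gT|%:R - 1) - #|'Z([set: gT])%g|%:R)) :> R).
Proof.
move=> nab con.
have z2 := Z_half nab.
have z1 : (0 < #|'Z([set: gT])%g|)%N by apply: cardG_gt0.
have L : (#|'Z([set: gT])%g|%:R / 2 : rat) <= isoperimetric_number gT.
  rewrite /isoperimetric_number; apply: le_bigmin.
    by rewrite ler_pdivrMr // -natrM ler_nat; lia.
  move=> S /andP [s0 s2].
  have h := lower_gen (fun x y => @Zcomm gT x y) z2 s0 s2.
  rewrite ler_pdivlMr ?ltr0n // mulrAC ler_pdivrMr // -!natrM ler_nat; lia.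
have U : isoperimetric_number gT <= #|'Z([set: gT])%g|%:R.
  case: (pickP [pred u | u \notin 'Z([set: gT])%g]) => [u /= uZ|H]; last first.
    case/negP: nab; apply/center_idP; apply/setP=> x; rewrite in_setT.
    by have := H x; rewrite /= => /negbFE.
  have sZC : 'Z([set: gT])%g \subset 'C[u]%g.
    by apply/subsetP=> x xZ; apply/cent1P; exact: Zcomm.
  set B := ('C[u] :\: 'Z([set: gT]))%g.
  have b0 : (0 < #|B|)%N by apply/card_gt0P; exists u; rewrite in_setD uZ cent1id.
  have b2 : (2 * #|B| <= #|gT|)%N.
    have hC : ('C[u]%G :!=: setT)%g.
      apply/eqP=> E; case/negP: uZ; apply: inZ => y.
      have : y \in 'C[u]%g by rewrite E inE.
      by move/cent1P.
    have := half_le hC; have := subset_leq_card (subsetDl 'C[u]%g 'Z([set: gT])%g).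
    rewrite -/B /= => h1 h2; apply: leq_trans h2; by rewrite leq_mul2l h1 orbT.
  have be : (#|edge_boundary B| <= #|B| * #|'Z([set: gT])%g|)%N.
    by rewrite -cardsX; apply: subset_leq_card; apply: upper_set.
  rewrite /isoperimetric_number.
  have PB : ((0 < #|B|)%N && (2 * #|B| <= #|gT|)%N) by rewrite b0 b2.
  have hb := @bigmin_le_cond _ _ _ (#|gT|%:R : rat) B (fun S : {set gT} => (0 < #|S|)%N && (2 * #|S| <= #|gT|)%N) (fun S : {set gT} => (#|edge_boundary S|%:R : rat) / #|S|%:R) PB.
  apply: le_trans hb _.
  by rewrite ler_pdivrMr ?ltr0n // -natrM ler_nat mulnC.
split.
  have := L; rewrite -(ler_rat R) => h; apply: le_trans h.
  by rewrite fmorph_div !rmorph_nat.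
have := U; rewrite -(ler_rat R) ratr_nat => h; apply: le_trans h _.
have hz1 : (1 : R) <= #|'Z([set: gT])%g|%:R by rewrite ler1n.
have hzn : (2 * #|'Z([set: gT])%g|%:R : R) <= #|gT|%:R by rewrite -natrM ler_nat.
rewrite -[X in X <= _](ger0_norm (ler0n _ #|'Z([set: gT])%g|)) -sqrtr_sqr ler_sqrt.
  nra.
nra.
Qed.
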